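(* Let $\varepsilon>0$, $\nu\in\mathcal{S}^1$, let $L\subset\mathbb{R}^2$ be a line orthogonal to $\nu$, and let $\alpha\in\{1,2,3\}$ satisfy $|\langle\hat e_\alpha,\nu^\perp\rangle|\le\tfrac12$. Then there exists a family of triangles $(T_z)_{z\in\mathbb{Z}}$ such that for every $z\in\mathbb{Z}$: $$T_z\in\mathcal{T}^+_\varepsilon(\mathbb{R}^2),\quad T_z\subset\Sigma^{\alpha,z}_\varepsilon,\quad T_z\cap L\ne\emptyset,\quad T_z\cap T_{z+1}\ne\emptyset .$$
   Context: Lattice: $\hat e_1=(1,0)$, $\hat e_2=\tfrac12(1,\sqrt3)$, $\hat e_3=\tfrac12(-1,\sqrt3)$, $\mathcal{L}=\{z_1\hat e_1+z_2\hat e_2\colon z\in\mathbb{Z}^2\}$, $\mathcal{L}^1=\{z_1(\hat e_1+\hat e_2)+z_2(\hat e_2+\hat e_3)\colon z\in\mathbb{Z}^2\}$, $\mathcal{L}^2=\mathcal{L}^1+\hat e_1$, $\mathcal{L}^3=\mathcal{L}^1+\hat e_2$. $\mathcal{T}(\mathbb{R}^2)$: closed triangles $\mathrm{conv}\{i,j,k\}$, $i,j,k\in\mathcal L$ pairwise at distance 1, labelled $i\in\mathcal{L}^1,j\in\mathcal{L}^2,k\in\mathcal{L}^3$. $\mathcal{T}^+(\mathbb{R}^2)$ is the subfamily of such triangles whose labelled vertices are positively (counterclockwise) oriented, i.e. $(j-i)\times(k-j)>0$ with $v\times w=v_1w_2-v_2w_1$ (the ''upward'' triangles); $\mathcal{T}^+_\varepsilon(\mathbb{R}^2)=\varepsilon\mathcal{T}^+(\mathbb{R}^2)$.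 For $w\in\mathbb{R}^2$, $w^\perp=(-w_2,w_1)$. Slices: $\Sigma^{\alpha,z}_\varepsilon=\{s\hat e_\alpha+t\hat e_\alpha^\perp\colon s\in\mathbb{R},\ t\in[\varepsilon\tfrac{\sqrt3}{2}z,\varepsilon\tfrac{\sqrt3}{2}(z+1)]\}$ for $z\in\mathbb{Z}$. *)

(* Defs.v *)
From Stdlib Require Import Reals Lra Lia ZArith.
Open Scope R_scope.

Definition pt := (R * R)%type.

Definition padd (v w : pt) : pt := (fst v + fst w, snd v + snd w).
Definition pscale (a : R) (v : pt) : pt := (a * fst v, a * snd v).
Definition dot (v w : pt) : R := fst v * fst w + snd v * snd w.
Definition cross (v w : pt) : R := fst v * snd w - snd v * fst w.
Definition psub (v w : pt) : pt := (fst v - fst w, snd v - snd w).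
Definition perp (w : pt) : pt := (- snd w, fst w).
Definition dist (v w : pt) : R := sqrt (dot (psub v w) (psub v w)).

Definition e1 : pt := (1, 0).
Definition e2 : pt := (/2, sqrt 3 / 2).
Definition e3 : pt := (- /2, sqrt 3 / 2).

(* \hat e_alpha for alpha in {1,2,3} (other indices are never used). *)
Definition ehat (alpha : nat) : pt :=
  match alpha with
  | 1%nat => e1
  | 2%nat => e2
  | _ => e3
  end.

Definition inL (p : pt) : Prop :=
  exists z1 z2 : Z, p = padd (pscale (IZR z1) e1) (pscale (IZR z2) e2).
Definition inL1 (p : pt) : Prop :=
  exists z1 z2 : Z,
    p = padd (pscale (IZR z1) (padd e1 e2)) (pscale (IZR z2) (padd e2 e3)).
Definition inL2 (p : pt) : Prop := exists q, inL1 q /\ p = padd q e1.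
Definition inL3 (p : pt) : Prop := exists q, inL1 q /\ p = padd q e2.

Definition conv3 (a b c : pt) (p : pt) : Prop :=
  exists l1 l2 l3 : R, 0 <= l1 /\ 0 <= l2 /\ 0 <= l3 /\ l1 + l2 + l3 = 1 /\
    p = padd (padd (pscale l1 a) (pscale l2 b)) (pscale l3 c).

Definition upward_triangle (T : pt -> Prop) : Prop :=
  exists i j k : pt,
    inL i /\ inL j /\ inL k /\
    inL1 i /\ inL2 j /\ inL3 k /\
    dist i j = 1 /\ dist j k = 1 /\ dist i k = 1 /\
    cross (psub j i) (psub k j) > 0 /\
    (forall p, T p <-> conv3 i j k p).

Definition upward_triangle_eps (eps : R) (T : pt -> Prop) : Prop :=
  exists T0 : pt -> Prop, upward_triangle T0 /\
    (forall p, T p <-> exists q, T0 q /\ p = pscale eps q).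

Definition slice (alpha : nat) (z : Z) (eps : R) (p : pt) : Prop :=
  exists s t : R,
    eps * (sqrt 3 / 2) * IZR z <= t <= eps * (sqrt 3 / 2) * (IZR z + 1) /\
    p = padd (pscale s (ehat alpha)) (pscale t (perp (ehat alpha))).

(* Main.v *)
Require Import Defs.
From Stdlib Require Import Reals ZArith Lra Lia Psatz.
Open Scope R_scope.

Lemma s3sq : sqrt 3 * sqrt 3 = 3.
Proof. apply sqrt_sqrt; lra. Qed.
Lemma s3pos : 0 < sqrt 3.
Proof. apply sqrt_lt_R0; lra. Qed.

Lemma pt_eq (a b c d : R) : a = c -> b = d -> (a, b) = (c, d).
Proof. intros; subst; reflexivity. Qed.

Ltac peq := unfold padd, pscale, psub, perp, e1, e2, e3; cbn [fst snd];
  repeat (rewrite plus_IZR || rewrite minus_IZR || rewrite opp_IZR || rewrite mult_IZR); apply pt_eq; field.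

Definition C (x y : Z) : pt := padd (pscale (IZR x) e1) (pscale (IZR y) e2).

Lemma inL_C x y : inL (C x y).
Proof. exists x, y; reflexivity. Qed.

Lemma inL1_C x y : ((y - x) mod 3 = 0)%Z -> inL1 (C x y).
Proof.
  intro H. set (z := ((y - x) / 3)%Z).
  assert (Hy : (y = x + 3 * z)%Z) by (unfold z; pose proof (Z.div_mod (y - x) 3 ltac:(lia)); lia).
  clearbody z. subst y. exists (x + z)%Z, z. unfold C. peq.
Qed.

Lemma mod3_of n q r : (0 <= r < 3)%Z -> (n = 3*q + r)%Z -> (n mod 3 = r)%Z.
Proof. intros Hr Hn. symmetry. apply (Z.mod_unique n 3 q r); lia. Qed.

Lemma inL2_C x y : ((y - x) mod 3 = 2)%Z -> inL2 (C x y).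
Proof.
  intro H. exists (C (x - 1) y). split.
  - apply inL1_C. pose proof (Z.div_mod (y - x) 3 ltac:(lia)).
    apply mod3_of with (q := ((y - x) / 3 + 1)%Z); lia.
  - unfold C; peq.
Qed.

Lemma inL3_C x y : ((y - x) mod 3 = 1)%Z -> inL3 (C x y).
Proof.
  intro H. exists (C x (y - 1)). split.
  - apply inL1_C. pose proof (Z.div_mod (y - x) 3 ltac:(lia)).
    apply mod3_of with (q := ((y - x) / 3)%Z); lia.
  - unfold C; peq.
Qed.

Lemma conv3_cyc a b c p : conv3 a b c p -> conv3 b c a p.
Proof.
  intros (l1&l2&l3&H1&H2&H3&H4&->). exists l2, l3, l1. repeat split; try lra.
  destruct a, b, c; unfold padd, pscale; cbn [fst snd]; apply pt_eq; ring.
Qed.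

Lemma up_ext (T T' : pt -> Prop) : (forall p, T p <-> T' p) -> upward_triangle T -> upward_triangle T'.
Proof.
  intros H (i&j&k&?&?&?&?&?&?&?&?&?&?&HT). exists i,j,k.
  do 10 (split; [assumption|]). intros p. rewrite <- H. apply HT.
Qed.

Ltac dist1 := unfold Defs.dist; match goal with |- sqrt ?x = 1 => replace x with 1; [apply sqrt_1|] end;
  unfold C, dot, psub, padd, pscale, e1, e2, e3; cbn [fst snd];
  repeat (rewrite plus_IZR || rewrite minus_IZR || rewrite opp_IZR || rewrite mult_IZR); pose proof s3sq; nra.
Ltac cr := unfold C, cross, psub, padd, pscale, e1, e2, e3; cbn [fst snd];
  repeat (rewrite plus_IZR || rewrite minus_IZR || rewrite opp_IZR || rewrite mult_IZR); pose proof s3pos; nra.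

Ltac cyct := first [assumption | apply conv3_cyc; assumption | do 2 apply conv3_cyc; assumption].

Lemma up_std (a b : Z) :
  upward_triangle (conv3 (C a b) (C (a+1) b) (C a (b+1))).
Proof.
  assert (Hm := Z.mod_pos_bound (b - a) 3 ltac:(lia)).
  destruct (Z.eq_dec ((b - a) mod 3) 0) as [H0|H0];
  [| destruct (Z.eq_dec ((b - a) mod 3) 1) as [H1|H1]].
  - exists (C a b), (C (a+1) b), (C a (b+1)).
    repeat split; try apply inL_C.
    + apply inL1_C; Z.div_mod_to_equations; lia.
    + apply inL2_C; Z.div_mod_to_equations; lia.
    + apply inL3_C; Z.div_mod_to_equations; lia.
    + dist1.
    + dist1.
    + dist1.
    + cr.
    + tauto.
    + tauto.
  -
    apply (up_ext (conv3 (C (a+1) b) (C a (b+1)) (C a b))).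
    { intro p; split; intro; cyct. }
    exists (C (a+1) b), (C a (b+1)), (C a b).
    repeat split; try apply inL_C.
    + apply inL1_C; Z.div_mod_to_equations; lia.
    + apply inL2_C; Z.div_mod_to_equations; lia.
    + apply inL3_C; Z.div_mod_to_equations; lia.
    + dist1.
    + dist1.
    + dist1.
    + cr.
    + tauto.
    + tauto.
  - apply (up_ext (conv3 (C a (b+1)) (C a b) (C (a+1) b))).
    { intro p; split; intro; cyct. }
    exists (C a (b+1)), (C a b), (C (a+1) b).
    repeat split; try apply inL_C.
    + apply inL1_C; Z.div_mod_to_equations; lia.
    + apply inL2_C; Z.div_mod_to_equations; lia.
    + apply inL3_C; Z.div_mod_to_equations; lia.
    + dist1.
    + dist1.
    + dist1.
    + cr.
    + tauto.
    + tauto.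
Qed.

Definition Pt (u w : pt) (m n : Z) : pt := padd (pscale (IZR m) u) (pscale (IZR n) w).
Definition fl (x : R) : Z := (up x - 1)%Z.
Lemma fl_spec x : IZR (fl x) <= x < IZR (fl x) + 1.
Proof. unfold fl. rewrite minus_IZR. destruct (archimed x). lra. Qed.

Lemma dot_add v w x : dot (padd v w) x = dot v x + dot w x.
Proof. destruct v, w, x; unfold dot, padd; cbn; ring. Qed.
Lemma dot_scale k v x : dot (pscale k v) x = k * dot v x.
Proof. destruct v, x; unfold dot, pscale; cbn; ring. Qed.

Lemma frame (u w nu : pt) (c : R) :
  dot u u = 1 ->
  w = padd (pscale (/2) u) (pscale (sqrt 3 / 2) (perp u)) ->
  dot nu nu = 1 ->
  Rabs (dot u (perp nu)) <= /2 ->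
  (forall m n, upward_triangle (conv3 (Pt u w m n) (padd (Pt u w m n) u) (padd (Pt u w m n) w))) ->
  exists tri : Z -> pt -> Prop, forall r : Z,
    upward_triangle (tri r) /\
    (forall p, tri r p -> exists s t, IZR r * (sqrt 3 / 2) <= t <= (IZR r + 1) * (sqrt 3 / 2) /\
        p = padd (pscale s u) (pscale t (perp u))) /\
    (exists p, tri r p /\ dot p nu = c) /\
    (exists p, tri r p /\ tri (r+1)%Z p).
Proof.
  intros Hu Hw Hnu Hb Hup.
  assert (Hh2 : (sqrt 3 / 2) * (sqrt 3 / 2) = 3/4) by (pose proof s3sq; nra).
  assert (Hh : 0 < sqrt 3 / 2) by (pose proof s3pos; lra).
  assert (Hab : dot u nu * dot u nu + dot (perp u) nu * dot (perp u) nu = dot u u * dot nu nu)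
    by (destruct u, nu; unfold dot, perp; cbn; ring).
  rewrite Hu, Hnu in Hab.
  assert (Hbb : dot u (perp nu) = - dot (perp u) nu) by (destruct u, nu; unfold dot, perp; cbn; ring).
  rewrite Hbb, Rabs_Ropp in Hb.
  assert (Hwn : dot w nu = /2 * dot u nu + sqrt 3 / 2 * dot (perp u) nu)
    by (rewrite Hw, dot_add, !dot_scale; ring).
  assert (Hwv : dot u (perp u) = 0) by (destruct u; unfold dot, perp; cbn; ring).
  clear Hbb Hwv. revert Hh Hh2 Hw Hab Hb Hwn.
  generalize (sqrt 3 / 2).
  intros h Hh Hh2 Hw Hab Hb Hwn.
  remember (dot u nu) as a eqn:Ea. remember (dot (perp u) nu) as b eqn:Eb.
  assert (Hb2 : -/2 <= b <= /2) by (unfold Rabs in Hb; destruct (Rcase_abs b); lra).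
  assert (Ha : a * a >= 3/4) by nra.
  assert (Ha0 : a <> 0) by (intro H0; rewrite H0 in Ha; lra).
  set (q := b / a).
  assert (Hq : b = q * a) by (unfold q; field; auto).
  assert (Hq2 : q * q <= /3).
  { assert (q * q * (a * a) <= /4) by (rewrite Hq in Hb2; nra).
    destruct (Rle_dec (q*q) (/3)); auto. nra. }
  assert (Hqh : -/2 <= q * h <= /2).
  { assert ((q*h) * (q*h) <= /4) by nra. nra. }
  set (d := - (q * h) - /2).
  set (g := fun r : Z => c / a - q * (IZR r * h) - IZR r / 2).
  assert (Hg : forall r, g (r + 1)%Z = g r + d).
  { intro r. unfold g, d. cbv beta. rewrite plus_IZR. unfold Rdiv. ring. }
  set (P := fun r => Pt u w (fl (g r)) r).
  exists (fun r => conv3 (P r) (padd (P r) u) (padd (P r) w)).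
  intro r. split; [apply Hup|]. split; [|split].
  - intros p (l1&l2&l3&H1&H2&H3&H4&->).
    exists (IZR (fl (g r)) + IZR r / 2 + l2 + l3/2), ((IZR r + l3) * h). split.
    + split; nra.
    + assert (l1 = 1 - l2 - l3) by lra. subst l1 w. unfold P, Pt.
      destruct u; unfold padd, pscale, perp; cbn [fst snd]; apply pt_eq; unfold Rdiv; ring.
  - set (l := g r - IZR (fl (g r))).
    pose proof (fl_spec (g r)).
    exists (padd (padd (pscale (1 - l) (P r)) (pscale l (padd (P r) u))) (pscale 0 (padd (P r) w))).
    split.
    + exists (1 - l), l, 0. unfold l. repeat split; try lra.
    + unfold P, Pt. rewrite !dot_add, !dot_scale, !dot_add, !dot_scale, Hwn, <- Ea.
      unfold l. generalize (IZR (fl (g r))). intro m. unfold g, q. cbv beta. rewrite Hq. unfold q. field. auto.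
  - pose proof (fl_spec (g r)). pose proof (fl_spec (g (r+1)%Z)).
    pose proof (Hg r) as Hgr. unfold d in Hgr.
    assert (A1 : (fl (g (r + 1)) < fl (g r) + 1)%Z).
    { apply lt_IZR. rewrite plus_IZR. lra. }
    assert (A2 : (fl (g r) - 2 < fl (g (r + 1)))%Z).
    { apply lt_IZR. rewrite minus_IZR. lra. }
    exists (padd (P r) w). split.
    + exists 0, 0, 1. repeat split; try lra.
      subst w. destruct u; unfold padd, pscale, perp; cbn [fst snd]; apply pt_eq; unfold Rdiv; ring.
    + unfold P. destruct (Z.eq_dec (fl (g (r+1)%Z)) (fl (g r))) as [E|E].
      * rewrite E. exists 1, 0, 0. repeat split; try lra.
        unfold Pt. rewrite plus_IZR. subst w. destruct u; unfold padd, pscale, perp; cbn [fst snd]; apply pt_eq; unfold Rdiv; ring.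
      * assert (E' : fl (g (r+1)%Z) = (fl (g r) - 1)%Z) by lia.
        rewrite E'. exists 0, 1, 0. repeat split; try lra.
        unfold Pt. rewrite plus_IZR, minus_IZR. subst w. destruct u; unfold padd, pscale, perp; cbn [fst snd]; apply pt_eq; unfold Rdiv; ring.
Qed.

Definition Goal_of (eps : R) (nu : pt) (c : R) (alpha : nat) :=
  exists T : Z -> (pt -> Prop),
    forall z : Z,
      upward_triangle_eps eps (T z) /\
      (forall p, T z p -> slice alpha z eps p) /\
      (exists p, T z p /\ dot p nu = c) /\
      (exists p, T z p /\ T (z + 1)%Z p).

Lemma assemble_pos eps nu c alpha u (tri : Z -> pt -> Prop) : 0 < eps -> u = ehat alpha ->
  (forall r : Z, upward_triangle (tri r) /\
    (forall p, tri r p -> exists s t, IZR r * (sqrt 3 / 2) <= t <= (IZR r + 1) * (sqrt 3 / 2) /\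
        p = padd (pscale s u) (pscale t (perp u))) /\
    (exists p, tri r p /\ dot p nu = c / eps) /\
    (exists p, tri r p /\ tri (r+1)%Z p)) ->
  Goal_of eps nu c alpha.
Proof.
  intros He Hu H. subst u.
  exists (fun z p => exists q, tri z q /\ p = pscale eps q).
  intro z. destruct (H z) as (H1&H2&H3&H4). split; [|split; [|split]].
  - exists (tri z). split; [exact H1|]. tauto.
  - intros p (q&Hq&->). destruct (H2 q Hq) as (s&t&Ht&->).
    exists (eps * s), (eps * t). split.
    + split; nra.
    + destruct (ehat alpha); unfold padd, pscale, perp; cbn [fst snd]; apply pt_eq; ring.
  - destruct H3 as (q&Hq&Hd). exists (pscale eps q). split; [exists q; auto|].
    rewrite dot_scale, Hd. field. lra.
  - destruct H4 as (q&Hq1&Hq2). exists (pscale eps q). split; exists q; auto.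
Qed.

Lemma assemble_neg eps nu c alpha u (tri : Z -> pt -> Prop) : 0 < eps -> u = pscale (-1) (ehat alpha) ->
  (forall r : Z, upward_triangle (tri r) /\
    (forall p, tri r p -> exists s t, IZR r * (sqrt 3 / 2) <= t <= (IZR r + 1) * (sqrt 3 / 2) /\
        p = padd (pscale s u) (pscale t (perp u))) /\
    (exists p, tri r p /\ dot p nu = c / eps) /\
    (exists p, tri r p /\ tri (r+1)%Z p)) ->
  Goal_of eps nu c alpha.
Proof.
  intros He Hu H. subst u.
  exists (fun z p => exists q, tri (- z - 1)%Z q /\ p = pscale eps q).
  intro z. destruct (H (- z - 1)%Z) as (H1&H2&H3&_). split; [|split; [|split]].
  - exists (tri (- z - 1)%Z). split; [exact H1|]. tauto.
  - intros p (q&Hq&->). destruct (H2 q Hq) as (s&t&Ht&->).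
    rewrite minus_IZR, opp_IZR in Ht.
    exists (- eps * s), (- eps * t). split.
    + split; nra.
    + destruct (ehat alpha); unfold padd, pscale, perp; cbn [fst snd]; apply pt_eq; ring.
  - destruct H3 as (q&Hq&Hd). exists (pscale eps q). split; [exists q; auto|].
    rewrite dot_scale, Hd. field. lra.
  - destruct (H (- z - 2)%Z) as (_&_&_&(q&Hq1&Hq2)).
    replace (- z - 2 + 1)%Z with (- z - 1)%Z in Hq2 by lia.
    exists (pscale eps q). split; exists q; split; auto.
    replace (- (z + 1) - 1)%Z with (- z - 2)%Z by lia. auto.
Qed.

Lemma up_any Q a b : Q = C a b -> upward_triangle (conv3 Q (padd Q e1) (padd Q e2)).
Proof.
  intros ->.
  replace (padd (C a b) e1) with (C (a + 1) b) by (unfold C; peq).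
  replace (padd (C a b) e2) with (C a (b + 1)) by (unfold C; peq).
  apply up_std.
Qed.

Definition w3 : pt := (-1, 0).
Definition u2 : pt := pscale (-1) e2.
Definition w2 : pt := pscale (-1) e3.

Lemma hup1 m n : upward_triangle (conv3 (Pt e1 e2 m n) (padd (Pt e1 e2 m n) e1) (padd (Pt e1 e2 m n) e2)).
Proof. apply up_any with m n. reflexivity. Qed.

Lemma hup3 m n : upward_triangle (conv3 (Pt e3 w3 m n) (padd (Pt e3 w3 m n) e3) (padd (Pt e3 w3 m n) w3)).
Proof.
  set (Q := C (- (m + n) - 1) m).
  replace (Pt e3 w3 m n) with (padd Q e1) by (unfold Q, Pt, C, w3; peq).
  replace (padd (padd Q e1) e3) with (padd Q e2) by (unfold Q, Pt, C, w3; peq).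
  replace (padd (padd Q e1) w3) with Q by (unfold Q, Pt, C, w3; peq).
  apply (up_ext (conv3 Q (padd Q e1) (padd Q e2))).
  { intro p; split; intro; cyct. }
  apply up_any with (- (m + n) - 1)%Z m. reflexivity.
Qed.

Lemma hup2 m n : upward_triangle (conv3 (Pt u2 w2 m n) (padd (Pt u2 w2 m n) u2) (padd (Pt u2 w2 m n) w2)).
Proof.
  set (Q := C n (- (m + n + 1))).
  replace (Pt u2 w2 m n) with (padd Q e2) by (unfold Q, Pt, C, u2, w2; peq).
  replace (padd (padd Q e2) u2) with Q by (unfold Q, Pt, C, u2, w2; peq).
  replace (padd (padd Q e2) w2) with (padd Q e1) by (unfold Q, Pt, C, u2, w2; peq).
  apply (up_ext (conv3 Q (padd Q e1) (padd Q e2))).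
  { intro p; split; intro; cyct. }
  apply up_any with n (- (m + n + 1))%Z. reflexivity.
Qed.

Ltac sq := unfold u2, w2, w3; unfold dot, padd, pscale, perp, e1, e2, e3, u2, w2, w3; cbn [fst snd];
  try apply pt_eq; pose proof s3sq; nra.

Theorem lemma4p6 (eps : R) (nu : pt) (c : R) (alpha : nat) :
  0 < eps ->
  dot nu nu = 1 ->
  (1 <= alpha <= 3)%nat ->
  Rabs (dot (ehat alpha) (perp nu)) <= / 2 ->
  exists T : Z -> (pt -> Prop),
    forall z : Z,
      upward_triangle_eps eps (T z) /\
      (forall p, T z p -> slice alpha z eps p) /\
      (exists p, T z p /\ dot p nu = c) /\
      (exists p, T z p /\ T (z + 1)%Z p).
Proof.
  intros Heps Hnu Hal Hb.
  assert (alpha = 1 \/ alpha = 2 \/ alpha = 3)%nat as Ha by lia.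
  destruct Ha as [ -> | [ -> | -> ] ].
  - destruct (frame e1 e2 nu (c / eps)) as [tri Htri];
      [sq | sq | exact Hnu | exact Hb | apply hup1 | ].
    exact (assemble_pos eps nu c 1 e1 tri Heps eq_refl Htri).
  - destruct (frame u2 w2 nu (c / eps)) as [tri Htri];
      [sq | sq | exact Hnu | | apply hup2 | ].
    + replace (dot u2 (perp nu)) with (- dot (ehat 2) (perp nu))
        by (destruct nu; unfold dot, u2, pscale, perp, ehat, e2; cbn [fst snd]; ring).
      rewrite Rabs_Ropp. exact Hb.
    + exact (assemble_neg eps nu c 2 u2 tri Heps eq_refl Htri).
  - destruct (frame e3 w3 nu (c / eps)) as [tri Htri];
      [sq | sq | exact Hnu | exact Hb | apply hup3 | ].
    exact (assemble_pos eps nu c 3 e3 tri Heps eq_refl Htri).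
Qed.
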